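(* Let $\mathbb{K}$ be a field of characteristic zero and let $V$ be a four-dimensional $\mathbb{K}$-vector space with basis $\{e_1,e_2,e_3,e_4\}$. For $s\in\mathbb{K}$ let $\mathfrak{A}_s=(V,\mu_s)$ be the anti-commutative algebra whose only nonzero products of basis elements (up to anti-commutativity) are $$\mu_s(e_1,e_3)=e_1,\quad \mu_s(e_1,e_4)=s e_2,\quad \mu_s(e_2,e_3)=s e_2.$$ Let $t\in\mathbb{K}$ with $t\neq 0,1$. Then $$\phi_{4,t}(\mathfrak{A}_s)=\begin{cases}6, & s=0,\\ 1, & s=t,\\ 0, & \text{otherwise,}\end{cases}$$ and consequently, for $t_1,t_2\in\mathbb{K}\setminus\{0,1\}$, the functions $\phi_{4,t_1}$ and $\phi_{4,t_2}$ are equal if and only if $t_1=t_2$.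
   Context: All algebras are finite dimensional over a field $\mathbb{K}$ of characteristic zero. An anti-commutative algebra is a vector space $V$ with a bilinear map $\mu:V\times V\to V$ satisfying $\mu(X,Y)=-\mu(Y,X)$. For constants $\alpha,\beta,\gamma\in\mathbb{K}$, an $(\alpha,\beta,\gamma)$-derivation of $(V,\mu)$ is a linear map $D:V\to V$ with $\alpha D\mu(X,Y)=\beta\mu(DX,Y)+\gamma\mu(X,DY)$ for all $X,Y\in V$; the space of these is denoted $\mathcal{D}(\alpha,\beta,\gamma)(V,\mu)$. Let $C^2(V;V)$ be the space of antisymmetric bilinear maps $V\times V\to V$ and $n=\dim V$. For $t\in\mathbb{K}$, $\phi_{n,t}:C^2(V;V)\to\{0,1,\dots,n^2\}$ is defined by $\phi_{n,t}(\mu)=\dim\mathcal{D}(t,1,0)(V,\mu)$; we write $\phi_{n,t}(\mathfrak{A})$ for $\phi_{n,t}(\mu)$ when $\mathfrak{A}=(V,\mu)$. *)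

(* Defs.v *)
From HB Require Import structures.
From mathcomp Require Import all_boot all_order all_algebra.
Set Implicit Arguments. Unset Strict Implicit. Unset Printing Implicit Defensive.
Import Order.TTheory GRing.Theory Num.Theory.
Local Open Scope ring_scope.

(* V = K^n, realized as row vectors 'rV[K]_n; the standard basis vector e_i
   (index i : 'I_n, 0-based) is delta_mx 0 i. A linear map D : V -> V is a
   matrix D : 'M[K]_n acting on row vectors, D X := X *m D. *)

Definition ev {K : fieldType} {n : nat} (i : 'I_n) : 'rV[K]_n := delta_mx 0 i.

(* An antisymmetric bilinear map V x V -> V is determined by its structure
   constants c i j = mu(e_i, e_j) with c i j = - c j i. *)
Definition C2 (K : fieldType) (n : nat) :=
  {c : 'I_n -> 'I_n -> 'rV[K]_n | forall i j, c i j = - c j i}.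

Definition bil {K : fieldType} {n : nat} (mu : C2 K n) (X Y : 'rV[K]_n) : 'rV[K]_n :=
  \sum_(i < n) \sum_(j < n) (X 0 i * Y 0 j) *: proj1_sig mu i j.

Definition is_derivation {K : fieldType} {n : nat} (a b g : K) (mu : C2 K n)
  (D : 'M[K]_n) : Prop :=
  forall X Y : 'rV[K]_n,
    a *: (bil mu X Y *m D) = b *: bil mu (X *m D) Y + g *: bil mu X (Y *m D).

(* The defect of D with respect to the derivation identity, which is a bilinear
   map V x V -> V recorded by its values on pairs of basis vectors. *)
Definition der_defect {K : fieldType} {n : nat} (a b g : K) (mu : C2 K n)
  (D : 'M[K]_n) : {ffun 'I_n * 'I_n -> 'rV[K]_n} :=
  [ffun p => a *: (bil mu (ev p.1) (ev p.2) *m D)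
             - (b *: bil mu (ev p.1 *m D) (ev p.2) + g *: bil mu (ev p.1) (ev p.2 *m D))].

Definition Der_space {K : fieldType} {n : nat} (a b g : K) (mu : C2 K n)
  : {vspace 'M[K]_n} := lker (linfun (der_defect a b g mu)).

Definition phi {K : fieldType} (n : nat) (t : K) (mu : C2 K n) : nat :=
  \dim (Der_space t 1 0 mu).

Definition skew {K : fieldType} {n : nat} (u : 'I_n -> 'I_n -> 'rV[K]_n)
  (i j : 'I_n) : 'rV[K]_n :=
  if (i < j)%N then u i j else if (j < i)%N then - u j i else 0.

Lemma skew_anti {K : fieldType} {n : nat} (u : 'I_n -> 'I_n -> 'rV[K]_n) i j :
  skew u i j = - skew u j i.
Proof.
rewrite /skew; case: (ltngtP i j) => [lt|lt|eq]; rewrite ?opprK //.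
by rewrite oppr0.
Qed.

(* The algebra A_s on K^4: mu(e1,e3) = e1, mu(e1,e4) = s e2, mu(e2,e3) = s e2
   (0-based indices: e1 = ev 0, e2 = ev 1, e3 = ev 2, e4 = ev 3). *)
Definition A_upper {K : fieldType} (s : K) (i j : 'I_4) : 'rV[K]_4 :=
  match val i, val j with
  | 0%N, 2%N => ev (inord 0)
  | 0%N, 3%N => s *: ev (inord 1)
  | 1%N, 2%N => s *: ev (inord 1)
  | _, _ => 0
  end.

Definition A_alg {K : fieldType} (s : K) : C2 K 4 :=
  exist _ (skew (A_upper s)) (skew_anti (A_upper s)).

Arguments phi {K} n t mu.

(* Main.v *)
Require Import Defs.
From HB Require Import structures.
From mathcomp Require Import all_boot all_order all_algebra ring.
Import Order.TTheory GRing.Theory Num.Theory.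
Local Open Scope ring_scope.

Definition i0 : 'I_4 := @Ordinal 4 0 isT.
Definition i1 : 'I_4 := @Ordinal 4 1 isT.
Definition i2 : 'I_4 := @Ordinal 4 2 isT.
Definition i3 : 'I_4 := @Ordinal 4 3 isT.

Lemma ord4P (P : 'I_4 -> Prop) : P i0 -> P i1 -> P i2 -> P i3 -> forall i, P i.
Proof.
move=> H0 H1 H2 H3 [[|[|[|[|n]]]] Hn] //.
- by rewrite (_ : Ordinal Hn = i0) //; apply: val_inj.
- by rewrite (_ : Ordinal Hn = i1) //; apply: val_inj.
- by rewrite (_ : Ordinal Hn = i2) //; apply: val_inj.
- by rewrite (_ : Ordinal Hn = i3) //; apply: val_inj.
Qed.

Lemma sum4 (V : nmodType) (F : 'I_4 -> V) : \sum_(i<4) F i = F i0 + F i1 + F i2 + F i3.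
Proof.
rewrite !big_ord_recr big_ord0 /= add0r.
by congr (_+_+_+_); congr F; apply: val_inj.
Qed.

Lemma inord0 : inord 0 = i0 :> 'I_4. Proof. by apply: val_inj; rewrite /= inordK. Qed.
Lemma inord1 : inord 1 = i1 :> 'I_4. Proof. by apply: val_inj; rewrite /= inordK. Qed.

Definition Bf {K : fieldType} (s : K) (X Y : 'rV[K]_4) (k : 'I_4) : K :=
  if k == i0 then X 0 i0 * Y 0 i2 - X 0 i2 * Y 0 i0
  else if k == i1 then s * (X 0 i0 * Y 0 i3 - X 0 i3 * Y 0 i0 + X 0 i1 * Y 0 i2 - X 0 i2 * Y 0 i1)
  else 0.

Lemma bilE {K : fieldType} (s : K) X Y : bil (A_alg s) X Y = \row_k Bf s X Y k.
Proof.
apply/rowP => k; rewrite /bil summxE !mxE sum4.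
rewrite !summxE !sum4 /=; rewrite /Defs.skew /A_upper /= !inord0 !inord1.
elim/ord4P: k; rewrite /Bf /ev !mxE /=. all: ring.
Qed.

Lemma bil_linl {K : fieldType} {n : nat} (mu : C2 K n) (c : K) X Z Y :
  bil mu (c *: X + Z) Y = c *: bil mu X Y + bil mu Z Y.
Proof.
rewrite /bil scaler_sumr -big_split /=; apply: eq_bigr => i _.
rewrite scaler_sumr -big_split /=; apply: eq_bigr => j _.
by rewrite !mxE scalerA -scalerDl mulrDl mulrA.
Qed.

Lemma bil_linr {K : fieldType} {n : nat} (mu : C2 K n) (c : K) X Z Y :
  bil mu Y (c *: X + Z) = c *: bil mu Y X + bil mu Y Z.
Proof.
rewrite /bil scaler_sumr -big_split /=; apply: eq_bigr => i _.
rewrite scaler_sumr -big_split /=; apply: eq_bigr => j _.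
by rewrite !mxE scalerA -scalerDl mulrDr mulrCA.
Qed.

Lemma dd_lin {K : fieldType} {n : nat} (a b g : K) (mu : C2 K n) :
  linear (der_defect a b g mu).
Proof.
move=> c D1 D2; apply/ffunP => p; rewrite !ffunE.
rewrite !mulmxDr -!scalemxAr bil_linl bil_linr.
apply/rowP => k; rewrite !mxE.
ring.
Qed.

Section Inst.
Variables (K : fieldType) (n : nat) (a b g : K) (mu : C2 K n).
HB.instance Definition _ := GRing.isLinear.Build K 'M[K]_n {ffun 'I_n * 'I_n -> 'rV[K]_n} *:%R
  (der_defect a b g mu) (dd_lin a b g mu).
End Inst.

Lemma memDer {K : fieldType} {n : nat} (a b g : K) (mu : C2 K n) D :
  (D \in Der_space a b g mu) = (der_defect a b g mu D == 0).
Proof. by rewrite memv_ker lfunE. Qed.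

Lemma ddE {K : fieldType} (t s : K) (D : 'M[K]_4) i j k :
  der_defect t 1 0 (A_alg s) D (i, j) 0 k =
  t * (Bf s (ev i) (ev j) i0 * D i0 k + Bf s (ev i) (ev j) i1 * D i1 k) - Bf s (row i D) (ev j) k.
Proof.
by rewrite ffunE /= !mxE mul0r mul1r addr0 -rowE !bilE sum4 !mxE /Bf /= !mul0r !addr0.
Qed.

Lemma derP {K : fieldType} (t s : K) (D : 'M[K]_4) :
  D \in Der_space t 1 0 (A_alg s) <->
  (forall i j k : 'I_4, t * (Bf s (ev i) (ev j) i0 * D i0 k + Bf s (ev i) (ev j) i1 * D i1 k)
     = Bf s (row i D) (ev j) k).
Proof.
rewrite memDer; split.
- move/eqP/ffunP => H i j k; move: (H (i, j)) => /rowP/(_ k).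
  by rewrite ddE !ffunE mxE => /eqP; rewrite subr_eq0 => /eqP.
- move=> H; apply/eqP/ffunP => -[i j]; apply/rowP => k.
  by rewrite ddE !ffunE mxE H subrr.
Qed.

Lemma from_eq {K : fieldType} {A B : K} (e : A = B) (c : K) {P : K} : P = c * (A - B) -> P = 0.
Proof. by move=> ->; rewrite e subrr mulr0. Qed.

Lemma L1 {K : fieldType} {t x : K} : t != 0 -> t * x = 0 -> x = 0.
Proof. by move=> tn /eqP; rewrite mulf_eq0 (negbTE tn) => /eqP. Qed.

Ltac der H i j k := first
  [ apply: (from_eq (H i j k) 1); rewrite /Bf /ev !mxE /=; ring
  | apply: (from_eq (H i j k) (-1)); rewrite /Bf /ev !mxE /=; ring ].

Lemma der0_sub {K : fieldType} (t : K) (D : 'M[K]_4) : t != 0 -> t != 1 ->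
  D \in Der_space t 1 0 (A_alg 0) ->
  [/\ forall k, D i0 k = 0, forall k, D k i0 = 0 & forall k, D k i2 = 0].
Proof.
move=> t0 t1 /derP H.
have t1' : t - 1 != 0 by rewrite subr_eq0.
have h01 : D i0 i1 = 0 by apply: (L1 t0); der H i2 i0 i1.
have h02 : D i0 i2 = 0 by apply: (L1 t0); der H i2 i0 i2.
have h03 : D i0 i3 = 0 by apply: (L1 t0); der H i2 i0 i3.
have e1 : t * D i0 i0 - D i2 i2 = 0 by der H i2 i0 i0.
have h00 : D i0 i0 = 0 by apply: (L1 t1'); der H i0 i2 i0.
have h22 : D i2 i2 = 0.
  by move: e1; rewrite h00 mulr0 sub0r => /eqP; rewrite oppr_eq0 => /eqP.
have h12 : D i1 i2 = 0 by der H i1 i0 i0.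
have h32 : D i3 i2 = 0 by der H i3 i0 i0.
have h10 : D i1 i0 = 0 by der H i1 i2 i0.
have h20 : D i2 i0 = 0 by der H i2 i2 i0.
have h30 : D i3 i0 = 0 by der H i3 i2 i0.
by split; elim/ord4P.
Qed.

Lemma der0_sup {K : fieldType} (t : K) (D : 'M[K]_4) :
  (forall k, D i0 k = 0) -> (forall k, D k i0 = 0) -> (forall k, D k i2 = 0) ->
  D \in Der_space t 1 0 (A_alg 0).
Proof.
move=> Z1 Z2 Z3; apply/derP => i j k.
elim/ord4P: i; elim/ord4P: j; elim/ord4P: k; rewrite /Bf /ev !mxE /= ?Z1 ?Z2 ?Z3; ring.
Qed.

Lemma derS_sub {K : fieldType} (t s : K) (D : 'M[K]_4) : t != 0 -> t != 1 -> s != 0 ->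
  D \in Der_space t 1 0 (A_alg s) ->
  [/\ D = D i0 i1 *: delta_mx i0 i1 + D i2 i3 *: delta_mx i2 i3,
      t * D i0 i1 - s * D i2 i3 = 0 & (t - s) * D i0 i1 = 0].
Proof.
move=> t0 t1 s0 /derP H.
have t1' : t - 1 != 0 by rewrite subr_eq0.
have ts0 : t * s != 0 by rewrite mulf_neq0.
have h10 : D i1 i0 = 0 by apply: (L1 s0); der H i1 i3 i1.
have h20 : D i2 i0 = 0 by apply: (L1 s0); der H i2 i3 i1.
have h30 : D i3 i0 = 0 by apply: (L1 s0); der H i3 i3 i1.
have h12 : D i1 i2 = 0 by apply: (L1 ts0); der H i0 i3 i2.
have h13 : D i1 i3 = 0 by apply: (L1 ts0); der H i0 i3 i3.
have e : s * (t * D i1 i1 - D i0 i0) = 0 by der H i0 i3 i1.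
have h02 : D i0 i2 = 0 by apply: (L1 t0); der H i0 i2 i2.
have h03 : D i0 i3 = 0 by apply: (L1 t0); der H i0 i2 i3.
have h00 : D i0 i0 = 0 by apply: (L1 t1'); der H i0 i2 i0.
have h11 : D i1 i1 = 0.
  by apply: (L1 t0); move: (L1 s0 e); rewrite h00 subr0.
have r1 : (t - s) * D i0 i1 = 0 by der H i0 i2 i1.
have h21 : D i2 i1 = 0 by apply: (L1 s0); der H i2 i2 i1.
have h31 : D i3 i1 = 0 by apply: (L1 s0); der H i3 i2 i1.
have h32 : D i3 i2 = 0 by apply: (L1 s0); der H i3 i1 i1.
have e2 : s * (D i2 i2 - t * D i1 i1) = 0 by der H i2 i1 i1.
have h22 : D i2 i2 = 0 by move: (L1 s0 e2); rewrite h11 mulr0 subr0.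
have r2 : t * D i0 i1 - s * D i2 i3 = 0 by der H i2 i0 i1.
have e3 : s * (D i3 i3 - t * D i1 i1) = 0 by der H i3 i0 i1.
have h33 : D i3 i3 = 0 by move: (L1 s0 e3); rewrite h11 mulr0 subr0.
split => //; apply/matrixP => r c.
by elim/ord4P: r; elim/ord4P: c; rewrite !mxE /= ?mulr0 ?mulr1 ?addr0 ?add0r.
Qed.

Lemma derS_sup {K : fieldType} (t : K) :
  delta_mx i0 i1 + delta_mx i2 i3 \in Der_space t 1 0 (A_alg t).
Proof.
apply/derP => i j k.
elim/ord4P: i; elim/ord4P: j; elim/ord4P: k; rewrite /Bf /ev !mxE /=; ring.
Qed.


Definition j0 : 'I_6 := @Ordinal 6 0 isT.
Definition j1 : 'I_6 := @Ordinal 6 1 isT.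
Definition j2 : 'I_6 := @Ordinal 6 2 isT.
Definition j3 : 'I_6 := @Ordinal 6 3 isT.
Definition j4 : 'I_6 := @Ordinal 6 4 isT.
Definition j5 : 'I_6 := @Ordinal 6 5 isT.

Lemma ord6P (P : 'I_6 -> Prop) : P j0 -> P j1 -> P j2 -> P j3 -> P j4 -> P j5 -> forall i, P i.
Proof.
move=> H0 H1 H2 H3 H4 H5 [[|[|[|[|[|[|n]]]]]] Hn] //.
- by rewrite (_ : Ordinal Hn = j0) //; apply: val_inj.
- by rewrite (_ : Ordinal Hn = j1) //; apply: val_inj.
- by rewrite (_ : Ordinal Hn = j2) //; apply: val_inj.
- by rewrite (_ : Ordinal Hn = j3) //; apply: val_inj.
- by rewrite (_ : Ordinal Hn = j4) //; apply: val_inj.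
- by rewrite (_ : Ordinal Hn = j5) //; apply: val_inj.
Qed.

Lemma sum6 (V : nmodType) (F : 'I_6 -> V) :
  \sum_(i<6) F i = F j0 + F j1 + F j2 + F j3 + F j4 + F j5.
Proof.
rewrite !big_ord_recr big_ord0 /= add0r.
by congr (_+_+_+_+_+_); congr F; apply: val_inj.
Qed.

Definition S6 {K : fieldType} : seq 'M[K]_4 :=
  [:: delta_mx i1 i1; delta_mx i1 i3; delta_mx i2 i1; delta_mx i2 i3;
      delta_mx i3 i1; delta_mx i3 i3].

Lemma free_S6 {K : fieldType} : free (@S6 K).
Proof.
apply/(@freeP _ _ _ (in_tuple (@S6 K))) => k; rewrite sum6 /= => /matrixP H.
elim/ord6P.
- by move: (H i1 i1); rewrite !mxE /= => <-; ring.
- by move: (H i1 i3); rewrite !mxE /= => <-; ring.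
- by move: (H i2 i1); rewrite !mxE /= => <-; ring.
- by move: (H i2 i3); rewrite !mxE /= => <-; ring.
- by move: (H i3 i1); rewrite !mxE /= => <-; ring.
- by move: (H i3 i3); rewrite !mxE /= => <-; ring.
Qed.

Lemma phi_s0 {K : fieldType} (t : K) : t != 0 -> t != 1 -> phi 4 t (A_alg 0) = 6%N.
Proof.
move=> t0 t1; rewrite /phi.
have -> : Der_space t 1 0 (A_alg 0) = <<S6>>%VS.
  apply/eqP; rewrite eqEsubv; apply/andP; split.
  - apply/subvP => D /(der0_sub _ _ t0 t1) [Z1 Z2 Z3].
    have -> : D = D i1 i1 *: delta_mx i1 i1 + D i1 i3 *: delta_mx i1 i3
       + D i2 i1 *: delta_mx i2 i1 + D i2 i3 *: delta_mx i2 i3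
       + D i3 i1 *: delta_mx i3 i1 + D i3 i3 *: delta_mx i3 i3.
      apply/matrixP => r c.
      by elim/ord4P: r; elim/ord4P: c; rewrite !mxE /= ?Z1 ?Z2 ?Z3; ring.
    by rewrite !rpredD // rpredZ // memv_span // !inE eqxx ?orbT.
  - apply/span_subvP => M; rewrite !inE.
    by do ![case/orP=> [/eqP->|]|move/eqP->]; apply: der0_sup; elim/ord4P; rewrite mxE.
by rewrite /phi; move/eqP: (@free_S6 K).
Qed.

Lemma phi_st {K : fieldType} (t : K) : t != 0 -> t != 1 -> phi 4 t (A_alg t) = 1%N.
Proof.
move=> t0 t1; rewrite /phi.
have -> : Der_space t 1 0 (A_alg t) = <[delta_mx i0 i1 + delta_mx i2 i3]>%VS.
  apply/eqP; rewrite eqEsubv; apply/andP; split.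
  - apply/subvP => D /(derS_sub _ _ _ t0 t1 t0) [eD r2 _].
    have e : D i2 i3 = D i0 i1.
      apply/eqP; rewrite -subr_eq0; apply/eqP; apply: (L1 t0).
      by rewrite mulrBr -opprB r2 oppr0.
    by rewrite eD e -scalerDr rpredZ // memv_line.
  - rewrite -span_seq1; apply/span_subvP => M; rewrite inE => /eqP ->.
    exact: derS_sup.
rewrite /phi dim_vline; case: eqP => // /matrixP/(_ i0 i1).
by rewrite !mxE /= addr0 => /eqP; rewrite oner_eq0.
Qed.

Lemma phi_other {K : fieldType} (t s : K) : t != 0 -> t != 1 -> s != 0 -> s != t ->
  phi 4 t (A_alg s) = 0%N.
Proof.
move=> t0 t1 s0 st; rewrite /phi.
have -> : Der_space t 1 0 (A_alg s) = 0%VS; last by rewrite /phi dimv0.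
apply/eqP; rewrite -subv0; apply/subvP => D /(derS_sub _ _ _ t0 t1 s0) [eD r2 r1].
have ts : t - s != 0 by rewrite subr_eq0 eq_sym.
have h01 := L1 ts r1.
move: r2; rewrite h01 mulr0 sub0r => /eqP; rewrite oppr_eq0 => /eqP /(L1 s0) h23.
by rewrite eD h01 h23 !scale0r addr0 memv0.
Qed.

Lemma part1 {K : fieldType} (t : K) : t != 0 -> t != 1 -> forall s : K,
  phi 4 t (A_alg s) = (if s == 0 then 6%N else if s == t then 1%N else 0%N).
Proof.
move=> t0 t1 s; have [->|s0] := eqP; first exact: phi_s0.
have [->|st] := eqP; first exact: phi_st.
by apply: phi_other => //; apply/eqP.
Qed.

Theorem proposition2p1 (K : fieldType) (charK0 : [pchar K] =i pred0) :
  (forall t : K, t != 0 -> t != 1 ->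
     forall s : K,
       phi 4 t (A_alg s) = (if s == 0 then 6%N else if s == t then 1%N else 0%N))
  /\
  (forall t1 t2 : K, t1 != 0 -> t1 != 1 -> t2 != 0 -> t2 != 1 ->
     (phi 4 t1 = phi 4 t2 <-> t1 = t2)).
Proof.
split; first exact: @part1.
move=> t1 t2 a1 b1 a2 b2; split; last by move->.
move=> E; have := congr1 (fun f => f (A_alg t1)) E.
rewrite /= (part1 _ a1 b1) (part1 _ a2 b2) (negbTE a1) eqxx.
by case: eqP.
Qed.
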